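(* The log-linear model $\mathcal{L}(\widetilde\Phi_k\times\Psi:\ 1\le k\le n-1)$ of strictly positive $L_S$-decomposable distributions on $S_n$ has number of free parameters \[ c_n=\sum_{i=1}^n\left[\binom{n}{i}-1\right]=2^n-n-1. \]
   Context: $S_n$ is the group of permutations of $\{1,\ldots,n\}$. Product partition of the $n\times n$ board: $\mathcal{B}=\mathcal{R}\times\mathcal{C}=(R_i\times C_j)$ for partitions $\mathcal{R},\mathcal{C}$ of $\{1,\ldots,n\}$, with marginal $|\pi_{\mathcal{B}}|=(t_{ij})$, $t_{ij}=|\{s:(s,\pi(s))\in R_i\times C_j\}|$; $U^{\mathcal{B}}=\{v\in\mathbb{R}^{S_n}: |\pi_{\mathcal{B}}|=|\sigma_{\mathcal{B}}|\Rightarrow v(\pi)=v(\sigma)\}$. $\mathcal{L}(\mathcal{B}_1,\ldots,\mathcal{B}_m)$ is the set of strictly positive distributions $p$ on $S_n$ with $\log p\in U:=\mathrm{Span}(U^{\mathcal{B}_1},\ldots,U^{\mathcal{B}_m})$; its number of free parameters is $\dim U-1$. Thin sections $\widetilde\Phi_k=(\{1,\ldots,k\},\{k+1,\ldots,n\})$; full partition $\Psi=(\{1\},\ldots,\{n\})$. *)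

(* Defs.v *)
From HB Require Import structures.
From mathcomp Require Import all_boot all_order all_algebra all_fingroup.
Set Implicit Arguments. Unset Strict Implicit. Unset Printing Implicit Defensive.
Import GRing.Theory.
Local Open Scope ring_scope.

(* A partition of {0,...,n-1} into labelled blocks is given by a labelling
   function  f : 'I_n -> A  (block of s = label f s). *)

Definition marginal n (A B : finType) (fr : 'I_n -> A) (fc : 'I_n -> B)
  (p : 'S_n) (a : A) (b : B) : nat :=
  #|[set s : 'I_n | (fr s == a) && (fc (p s) == b)]|.

Definition same_marginal n (A B : finType) (fr : 'I_n -> A) (fc : 'I_n -> B)
  (p q : 'S_n) : bool :=
  [forall a : A, forall b : B, marginal fr fc p a b == marginal fr fc q a b].

Definition evdiff (R : fieldType) n (p q : 'S_n) :
  'Hom({ffun 'S_n -> R^o}, R^o) :=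
  linfun (fun v : {ffun 'S_n -> R^o} => v p - v q).

Definition UB (R : fieldType) n (A B : finType) (fr : 'I_n -> A)
  (fc : 'I_n -> B) : {vspace {ffun 'S_n -> R^o}} :=
  (\bigcap_(pq : 'S_n * 'S_n | same_marginal fr fc pq.1 pq.2)
      lker (evdiff R pq.1 pq.2))%VS.

(* thin section Phi~_k = ({1..k},{k+1..n}); 0-based: label s < k *)
Definition thin n (k : nat) : 'I_n -> bool := fun s => (s < k)%N.
Definition fullp n : 'I_n -> 'I_n := id.

Definition U_thin (R : fieldType) n : {vspace {ffun 'S_n -> R^o}} :=
  (\sum_(1 <= k < n) UB R (@thin n k) (@fullp n))%VS.

Definition free_params (R : fieldType) n := (\dim (U_thin R n) - 1)%N.

(* Main.v *)
Require Import Defs.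
From HB Require Import structures.
From mathcomp Require Import all_boot all_order all_algebra all_fingroup.
Set Implicit Arguments. Unset Strict Implicit. Unset Printing Implicit Defensive.
Import GRing.Theory.

Definition low n k : {set 'I_n} := [set s : 'I_n | (s < k)%N].
Definition img n (p : 'S_n) k : {set 'I_n} := p @: low n k.

Lemma card_low n k : (k <= n)%N -> #|low n k| = k.
Proof.
move=> hk.
have -> : low n k = widen_ord hk @: [set: 'I_k].
  apply/setP=> s; rewrite inE; apply/idP/imsetP => [sk|[i _ ->]]; last exact: (ltn_ord i).
  by exists (Ordinal sk) => //; apply/val_inj.
rewrite card_imset ?cardsT ?card_ord // => a b ab; apply: val_inj; exact: (congr1 val ab).
Qed.

Lemma card_img n (p : 'S_n) k : (k <= n)%N -> #|img p k| = k.
Proof. by move=> hk; rewrite /img card_imset ?card_low //; exact: perm_inj. Qed.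

Definition pres n k (s : 'S_n) := forall x : 'I_n, (x < k)%N -> (s x < k)%N.

Lemma img_pres n k (s q : 'S_n) : pres k s -> img (s * q)%g k = img q k.
Proof.
move=> hs; rewrite /img.
have -> : (s * q)%g @: low n k = q @: (s @: low n k).
  by rewrite -imset_comp; apply: eq_imset => x; rewrite permM.
have E : s @: low n k = low n k.
  apply/eqP; rewrite eqEcard card_imset ?leqnn ?andbT; last exact: perm_inj.
  by apply/subsetP=> y /imsetP[x]; rewrite !inE => xk ->; exact: hs.
by rewrite E.
Qed.

Lemma pres_mul n k (s t : 'S_n) : pres k s -> pres k t -> pres k (s * t)%g.
Proof. by move=> hs ht x xk; rewrite permM; apply/ht/hs. Qed.

Lemma pres_tperm n k (x y : 'I_n) : (x < k)%N = (y < k)%N -> pres k (tperm x y).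
Proof.
move=> hxy z zk; case: tpermP => [e|e|] //; move: zk; rewrite e ?hxy // -hxy.
Qed.

Lemma pres0 n (s : 'S_n) : pres 0 s. Proof. by []. Qed.
Lemma presn n (s : 'S_n) : pres n s. Proof. by move=> x _; exact: ltn_ord. Qed.

Lemma img1 n k : img (1 : 'S_n) k = low n k.
Proof. by rewrite /img (eq_imset _ (@perm1 _)) imset_id. Qed.

Lemma img_triv n k (p : 'S_n) : (k == 0)%N || (k == n) -> img p k = img 1 k.
Proof.
move=> /orP[]/eqP->.
  by rewrite -[p]mulg1 img_pres.
by rewrite -[p]mulg1 img_pres //; exact: presn.
Qed.

Definition wseq n (S : {set 'I_n}) := enum S ++ enum (~: S).

Lemma wseq_size n (S : {set 'I_n}) : size (wseq S) = n.
Proof. by rewrite size_cat -!cardE cardsC card_ord. Qed.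

Lemma wseq_uniq n (S : {set 'I_n}) : uniq (wseq S).
Proof.
rewrite cat_uniq !enum_uniq /= andbT; apply/hasPn => x.
by rewrite !mem_enum inE => /negbTE ->.
Qed.

Definition wfun n (S : {set 'I_n}) (i : 'I_n) : 'I_n := nth i (wseq S) i.

Lemma wfun_inj n (S : {set 'I_n}) : injective (wfun S).
Proof.
move=> i j; rewrite /wfun (set_nth_default i j); last by rewrite wseq_size.
move/eqP; rewrite nth_uniq ?wseq_size ?wseq_uniq //; by move=> /eqP /val_inj.
Qed.

Definition wit n (S : {set 'I_n}) : 'S_n := perm (@wfun_inj n S).

Lemma img_wit n (S : {set 'I_n}) : img (wit S) #|S| = S.
Proof.
apply/eqP; rewrite eqEcard card_img ?leqnn ?andbT; last by apply: leq_trans (max_card _) _; rewrite card_ord.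
apply/subsetP=> y /imsetP[x]; rewrite inE => xS ->.
rewrite permE /wfun /wseq nth_cat -cardE.
by rewrite xS -(mem_enum (mem S)) mem_nth // -cardE.
Qed.

Lemma mem_img n (p : 'S_n) k b : (b \in img p k) = ((p^-1)%g b < k)%N.
Proof.
rewrite /img; apply/imsetP/idP => [[x xk ->]|h]; first by rewrite permK; move: xk; rewrite inE.
by exists ((p^-1)%g b); rewrite ?inE ?permKV.
Qed.

Lemma marginalE n k (p : 'S_n) a b :
  marginal (thin k) (@fullp n) p a b = ((b \in img p k) == a).
Proof.
rewrite /marginal mem_img.
have -> : [set s : 'I_n | (thin k s == a) && (fullp (p s) == b)] =
   if ((p^-1)%g b < k)%N == a then [set (p^-1)%g b] else set0.
  apply/setP=> s; rewrite /fullp /thin; case: ifP => h; rewrite !inE;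
  (case: (eqVneq s ((p^-1)%g b)) => [->|ne]; [by rewrite permKV eqxx h ?andbT|]);
  (have -> : (p s == b) = false by apply/negbTE; apply: contra ne => /eqP <-; rewrite permK);
  by rewrite andbF.
by case: ifP => _; rewrite ?cards1 ?cards0.
Qed.

Lemma same_marginalE n k (p q : 'S_n) :
  same_marginal (thin k) (@fullp n) p q = (img p k == img q k).
Proof.
apply/forallP/eqP => [h|E]; last by move=> a; apply/forallP => b; rewrite !marginalE E.
apply/setP => b; have /forallP/(_ b) := h true.
by rewrite !marginalE !eqb_id => /eqP; case: (b \in _); case: (b \in _).
Qed.

Lemma binsum n : (\sum_(1 <= i < n.+1) ('C(n, i) - 1))%N = (2 ^ n - n - 1)%N.
Proof.
have h2 : (\sum_(0 <= i < n.+1) 'C(n, i))%N = (2 ^ n)%N.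
  by rewrite big_mkord -[2]/(1 + 1)%N expnDn; apply: eq_bigr => i _; rewrite !exp1n !muln1.
have h1 : (\sum_(1 <= i < n.+1) 'C(n, i))%N = (2 ^ n - 1)%N.
  by rewrite -h2 [in RHS]big_ltn // bin0 addKn.
have h3 : (\sum_(1 <= i < n.+1) ('C(n, i) - 1) + \sum_(1 <= i < n.+1) 1)%N
          = (\sum_(1 <= i < n.+1) 'C(n, i))%N.
  rewrite -big_split /= big_nat [RHS]big_nat; apply: eq_bigr => i /andP[_ hi].
  by rewrite subnK // bin_gt0 -ltnS.
move: h3; rewrite h1 sum_nat_const_nat subn1 /= muln1 => h3.
by rewrite subnAC -h3 addnK.
Qed.

Local Open Scope ring_scope.

Definition evd (R : fieldType) n (p q : 'S_n) (v : {ffun 'S_n -> R^o}) : R^o := v p - v q.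

Lemma evd_lin (R : fieldType) n (p q : 'S_n) : linear (@evd R n p q).
Proof. by move=> a u w; rewrite /evd !ffunE; rewrite scalerBr addrACA opprD. Qed.

HB.instance Definition _ (R : fieldType) n (p q : 'S_n) :=
  GRing.isLinear.Build R {ffun 'S_n -> R^o} R^o _ (@evd R n p q) (@evd_lin R n p q).

Lemma evdiffE (R : fieldType) n (p q : 'S_n) v : evdiff R p q v = v p - v q.
Proof. by rewrite /evdiff (lfunE (@evd R n p q)). Qed.

Lemma memUB (R : fieldType) n k (v : {ffun 'S_n -> R^o}) :
  reflect (forall p q : 'S_n, img p k = img q k -> v p = v q)
          (v \in UB R (@thin n k) (@fullp n)).
Proof.
rewrite memvE; apply: (iffP subv_bigcapP) => [h p q E|h [p q] /=].
  have := h (p, q); rewrite same_marginalE E eqxx -memvE memv_ker evdiffE /=.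
  by move=> /(_ isT) /eqP /subr0_eq.
rewrite same_marginalE -memvE memv_ker evdiffE => /eqP /h ->.
by rewrite subrr.
Qed.

Definition Phi_fun (R : fieldType) n (c : {ffun {set 'I_n} -> R^o}) : {ffun 'S_n -> R^o} :=
  [ffun p => \sum_(0 <= m < n.+1) c (img p m)].

Lemma Phi_lin (R : fieldType) n : linear (@Phi_fun R n).
Proof.
move=> a u w; apply/ffunP => p; rewrite !ffunE scaler_sumr -big_split /=.
by apply: eq_bigr => m _; rewrite !ffunE.
Qed.

HB.instance Definition _ (R : fieldType) n :=
  GRing.isLinear.Build R _ _ _ (@Phi_fun R n) (@Phi_lin R n).

Definition Phi (R : fieldType) n := linfun (@Phi_fun R n).

Lemma PhiE (R : fieldType) n (c : {ffun {set 'I_n} -> R^o}) p : Phi R n c p = \sum_(0 <= m < n.+1) c (img p m).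
Proof. by rewrite /Phi (lfunE (@Phi_fun R n)) ffunE. Qed.

Lemma memkerPhi (R : fieldType) n (c : {ffun {set 'I_n} -> R^o}) :
  reflect (forall p, \sum_(0 <= m < n.+1) c (img p m) = 0) (c \in lker (Phi R n)).
Proof.
rewrite memv_ker; apply: (iffP eqP) => [h p|h].
  by rewrite -PhiE h ffunE.
by apply/ffunP => p; rewrite PhiE h ffunE.
Qed.

Lemma ker_step (R : fieldType) n (c : {ffun {set 'I_n} -> R^o}) (i j : 'I_n) (q : 'S_n) :
  c \in lker (Phi R n) -> val j = (val i).+1 ->
  c (img (tperm i j * q)%g j) = c (img q j).
Proof.
move=> /memkerPhi hk ej.
have := hk (tperm i j * q)%g; have := hk q; move=> h2 h1.
have : \sum_(0 <= m < n.+1) (c (img (tperm i j * q)%g m) - c (img q m)) = 0.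
  by rewrite sumrB h1 h2 subrr.
have jn : (val j < n.+1)%N by apply: ltnW; rewrite ltnS ltn_ord.
rewrite big_mkord (bigD1 (Ordinal jn)) //= big1 ?addr0 => [/subr0_eq //|m ne].
rewrite img_pres ?subrr //; apply: pres_tperm.
have : (val m != val j) by apply: contra ne => /eqP e; apply/eqP/val_inj.
rewrite ej => mne.
have -> : (j < m)%N = ((val i).+1 < m)%N by rewrite -ej.
by rewrite leq_eqVlt eq_sym (negbTE mne).
Qed.

Lemma inv_tp (R : fieldType) n (c : {ffun {set 'I_n} -> R^o}) k (x y : 'I_n) (q : 'S_n) :
  c \in lker (Phi R n) -> (0 < k)%N -> (k < n)%N ->
  c (img (tperm x y * q)%g k) = c (img q k).
Proof.
move=> hc k0 kn.
have [exy|nxy] := eqVneq (x < k)%N (y < k)%N.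
  by rewrite img_pres //; apply: pres_tperm.
wlog [xk yk] : x y nxy / (x < k)%N /\ ~~ (y < k)%N.
  move=> W; case xk: (x < k)%N.
    by apply: W => //; split => //; move: nxy; rewrite xk; case: (y < k)%N.
  rewrite tpermC; apply: W; first by rewrite eq_sym.
  by move: nxy; rewrite xk; case: (y < k)%N.
have i_n : (k.-1 < n)%N by apply: leq_ltn_trans kn; exact: leq_pred.
pose i := Ordinal i_n; pose j := Ordinal kn.
have ej : val j = (val i).+1 by rewrite /= prednK.
have ik : (i < k)%N by rewrite /= prednK.
have jk : ~~ (j < k)%N by rewrite /= ltnn.
pose s := (tperm x i * tperm j y)%g.
have ps : pres k s by apply: pres_mul; apply: pres_tperm; rewrite ?ik ?xk ?(negbTE jk) ?(negbTE yk).
have psV : pres k (s^-1)%g.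
  rewrite /s invMg !tpermV; apply: pres_mul; apply: pres_tperm;
  by rewrite ?ik ?xk ?(negbTE jk) ?(negbTE yk).
have xj : x != j by apply: contraNneq jk => <-.
have xy : x != y by apply: contraNneq nxy => ->.
have ji : j != i by rewrite -val_eqE ej; apply/eqP => /esym /n_Sn.
have si : s i = x.
  by rewrite /s permM tpermR tpermD // eq_sym.
have sj : s j = y.
  by rewrite /s permM (tpermD xj) ?tpermL // eq_sym.
clearbody s.
have -> : tperm x y = ((s^-1) * (tperm i j * s))%g by rewrite -conjgE tpermJ si sj.
rewrite -mulgA -(mulgA (tperm i j)) (img_pres _ psV) (ker_step _ hc ej) (img_pres _ ps) //.
Qed.

Lemma inv_all (R : fieldType) n (c : {ffun {set 'I_n} -> R^o}) k (p : 'S_n) :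
  c \in lker (Phi R n) -> (k < n)%N -> c (img p k) = c (img 1 k).
Proof.
move=> hc kn; case: (posnP k) => [k0|k0]; first by rewrite img_triv // k0.
have [ts -> _] := prod_tpermP p; elim: ts => [|t ts IH]; first by rewrite big_nil.
by rewrite big_cons inv_tp.
Qed.

Definition psi_fun (R : fieldType) n (a : {ffun 'I_n -> R^o}) : {ffun {set 'I_n} -> R^o} :=
  [ffun S : {set 'I_n} => if #|S| == n then - \sum_(j < n) a j
                         else \sum_(j < n | val j == #|S|) a j].

Lemma psi_lin (R : fieldType) n : linear (@psi_fun R n).
Proof.
move=> r u w; apply/ffunP => S; rewrite !ffunE; case: ifP => _.
  rewrite scalerN scaler_sumr -opprD -big_split /=; congr (- _); apply: eq_bigr => j _; rewrite !ffunE //.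
by rewrite scaler_sumr -big_split /=; apply: eq_bigr => j _; rewrite !ffunE.
Qed.

HB.instance Definition _ (R : fieldType) n :=
  GRing.isLinear.Build R _ _ _ (@psi_fun R n) (@psi_lin R n).

Definition psi (R : fieldType) n := linfun (@psi_fun R n).

Lemma psiE (R : fieldType) n (a : {ffun 'I_n -> R^o}) (S : {set 'I_n}) :
  psi R n a S = if #|S| == n then - \sum_(j < n) a j
                else \sum_(j < n | val j == #|S|) a j.
Proof. by rewrite /psi (lfunE (@psi_fun R n)) ffunE. Qed.

Lemma psiE_lt (R : fieldType) n (a : {ffun 'I_n -> R^o}) (S : {set 'I_n}) (j : 'I_n) :
  #|S| = j -> psi R n a S = a j.
Proof.
move=> hS; rewrite psiE hS (ltn_eqF (ltn_ord j)).
by apply: big_pred1 => i /=; rewrite -val_eqE.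
Qed.

Lemma low_card (n : nat) (j : 'I_n) : #|low n j| = j.
Proof. by rewrite card_low // ltnW. Qed.

Lemma psi_inj (R : fieldType) n : lker (psi R n) == 0%VS.
Proof.
apply/lker0P => a b e; apply/ffunP => j.
by rewrite -(psiE_lt a (low_card j)) -(psiE_lt b (low_card j)) e.
Qed.

Lemma ker_eq (R : fieldType) n : lker (Phi R n) = limg (psi R n).
Proof.
apply/eqP; rewrite eqEsubv; apply/andP; split; apply/subvP => c.
  move=> hc; pose a : {ffun 'I_n -> R^o} := [ffun j : 'I_n => c (low n j)].
  suff -> : c = psi R n a by apply: memv_img; exact: memvf.
  apply/ffunP => S.
  have Sn : (#|S| <= n)%N by apply: leq_trans (max_card _) _; rewrite card_ord.
  case: (ltnP #|S| n) => [Sl|Sg].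
    rewrite (psiE_lt a (j := Ordinal Sl)) // ffunE /=.
    by rewrite -[in LHS](img_wit S) (inv_all _ hc Sl) img1.
  have Sn' : #|S| = n by apply/eqP; rewrite eqn_leq Sn Sg.
  have ST : S = low n n.
    apply/eqP; rewrite eqEcard card_low // Sn' leqnn andbT.
    by apply/subsetP => x _; rewrite inE ltn_ord.
  rewrite psiE Sn' eqxx.
  have /memkerPhi /(_ 1%g) := hc.
  rewrite big_nat_recr //= img1 -ST big_mkord => /eqP; rewrite addrC addr_eq0 => /eqP ->.
  by congr (- _); apply: eq_bigr => j _; rewrite ffunE img1.
move=> /memv_imgP [a _ ->]; apply/memkerPhi => p.
rewrite big_nat_recr //= big_mkord.
rewrite (psiE a) card_img // eqxx.
rewrite (eq_bigr (fun j => a j)) ?subrr // => j _.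
by apply: psiE_lt; rewrite card_img // ltnW.
Qed.

Lemma Phi_ffun (R : fieldType) n (c : {ffun {set 'I_n} -> R^o}) :
  Phi R n c = \sum_(0 <= m < n.+1) [ffun p : 'S_n => c (img p m)].
Proof. by apply/ffunP => p; rewrite PhiE sum_ffunE; apply: eq_bigr => m _; rewrite ffunE. Qed.

Lemma img_eq (R : fieldType) n (hn : (2 <= n)%N) : limg (Phi R n) = U_thin R n.
Proof.
have h1 : (1 < n)%N by [].
apply/eqP; rewrite eqEsubv; apply/andP; split; apply/subvP => v.
  move=> /memv_imgP [c _ ->]; rewrite Phi_ffun big_ltn // (big_nat_recr _ _ _ (ltnW h1)) /=.
  have hc : forall m, (m == 0)%N || (m == n) -> [ffun p : 'S_n => c (img p m)] \in U_thin R n.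
    move=> m hm; rewrite /U_thin big_geq_mkord; apply: (sumv_sup (Ordinal h1)) => //.
    rewrite -memvE; apply/memUB => p q _; rewrite !ffunE.
    by rewrite (img_triv p hm) (img_triv q hm).
  apply: memvD; first exact: hc.
  apply: memvD; last by apply: hc; rewrite eqxx orbT.
  rewrite /U_thin !big_geq_mkord; apply: memv_sumr => m /andP [_ _].
  by apply/memUB => p q E; rewrite !ffunE E.
rewrite /U_thin big_geq_mkord => /memv_sumP [vs hvs ->].
apply: rpred_sum => k /andP [_ hk]; have := hvs k; rewrite hk => /(_ isT) hv.
pose c : {ffun {set 'I_n} -> R^o} := [ffun S : {set 'I_n} => if #|S| == k then vs k (wit S) else 0].
suff -> : vs k = Phi R n c by apply: memv_img; exact: memvf.
apply/ffunP => p; rewrite PhiE big_mkord.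
have kn : (k < n.+1)%N by apply: ltnW; rewrite ltnS ltn_ord.
rewrite (bigD1 (Ordinal kn)) //= big1 ?addr0 => [|m ne]; last first.
  rewrite ffunE card_img; last by rewrite -ltnS ltn_ord.
  by rewrite ifN // ; apply: contra ne => /eqP e; apply/eqP/val_inj.
rewrite ffunE card_img ?eqxx; last by apply: ltnW.
have /memUB hv' := hv; apply: hv'; have := img_wit (img p k); rewrite card_img; last exact: ltnW.
by move=> ->.
Qed.

Local Close Scope ring_scope.
Unset Implicit Arguments.

Theorem mainTheorem11 (R : realFieldType) (n : nat) (hn : (2 <= n)%N) :
  free_params R n = (\sum_(1 <= i < n.+1) ('C(n, i) - 1))%N /\
  (\sum_(1 <= i < n.+1) ('C(n, i) - 1))%N = (2 ^ n - n - 1)%N.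
Proof.
split; last exact: binsum.
rewrite binsum /free_params -img_eq //.
have := limg_ker_dim (Phi R n) fullv.
rewrite capfv ker_eq (@limg_dim_eq _ _ _ (psi R n)); last by rewrite (eqP (psi_inj R n)) capv0.
have -> : \dim (fullv : {vspace {ffun 'I_n -> R^o}}) = n.
  by rewrite dimvf /dim /= card_ord muln1.
have -> : \dim (fullv : {vspace {ffun {set 'I_n} -> R^o}}) = (2^n)%N.
  by rewrite dimvf /dim /= muln1 -cardsT -powersetT card_powerset cardsT card_ord.
by move=> <-; rewrite addKn.
Qed.
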